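(* Let $v_j\neq v_k$ be values and $X_1,\dots,X_n$ finite domain variables. Introduce 0/1 variables $B_1,\dots,B_{n+1}$ with $B_1=0$, and for each $1\le i\le n$ the ternary constraint $C(X_i,B_i,B_{i+1})$ which holds iff ($X_i=v_j\Rightarrow B_{i+1}=1$), ($X_i\neq v_j\Rightarrow B_i=B_{i+1}$), and ($B_i=0\Rightarrow X_i\neq v_k$). Then (a) an assignment to $X_1,\dots,X_n$ satisfies $\mathrm{Precedence}([v_j,v_k],[X_1,\dots,X_n])$ iff it extends to an assignment of $B_1,\dots,B_{n+1}$ with $B_1=0$ satisfying all $C(X_i,B_i,B_{i+1})$; and (b) if the domains are such that $D(B_1)=\{0\}$ and every constraint $C(X_i,B_i,B_{i+1})$, $1\le i\le n$, is GAC (with all domains nonempty), then $\mathrm{Precedence}([v_j,v_k],[X_1,\dots,X_n])$ is GAC on the domains of $X_1,\dots,X_n$.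
   Context: A support of a constraint is an assignment of a value from its domain to each of its variables that satisfies it; a constraint is GAC iff every value in every variable's domain belongs to some support. $\mathrm{Precedence}([a,b],[X_1,\dots,X_n])$ holds iff $\min\{i \mid X_i=a \text{ or } i=n+1\} < \min\{i \mid X_i=b \text{ or } i=n+2\}$. *)

(* Defs.v *)
(* Variables are indexed from 1 (as in the paper): an
   assignment to X_1..X_n is a function X : nat -> T of which only X 1..X n
   matter; an assignment to B_1..B_{n+1} is B : nat -> bool (0 = false,
   1 = true). *)
From mathcomp Require Import all_boot.
Set Implicit Arguments. Unset Strict Implicit. Unset Printing Implicit Defensive.

Definition first_idx (P : pred nat) (m : nat) : nat :=
  head m [seq i <- iota 1 m | P i || (i == m)].

Definition Precedence (T : eqType) (a b : T) (n : nat) (X : nat -> T) : bool :=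
  first_idx (fun i => (i <= n) && (X i == a)) n.+1 <
  first_idx (fun i => (i <= n) && (X i == b)) n.+2.

Definition Cprec (T : eqType) (vj vk : T) (x : T) (bi bi1 : bool) : bool :=
  [&& (x == vj) ==> bi1, (x != vj) ==> (bi == bi1) & (~~ bi) ==> (x != vk)].

Definition GAC_C (T : eqType) (vj vk : T) (dx : seq T) (db db' : seq bool) : Prop :=
  [/\ forall x, x \in dx -> exists2 b, b \in db & exists2 b', b' \in db' & Cprec vj vk x b b',
      forall b, b \in db -> exists2 x, x \in dx & exists2 b', b' \in db' & Cprec vj vk x b b'
    & forall b', b' \in db' -> exists2 x, x \in dx & exists2 b, b \in db & Cprec vj vk x b b'].

Definition prec_support (T : eqType) (a b : T) (n : nat) (DX : nat -> seq T)
  (X : nat -> T) : Prop :=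
  (forall i, 1 <= i <= n -> X i \in DX i) /\ Precedence a b n X.

Definition GAC_Prec (T : eqType) (a b : T) (n : nat) (DX : nat -> seq T) : Prop :=
  forall i, 1 <= i <= n -> forall v, v \in DX i ->
    exists X, prec_support a b n DX X /\ X i = v.

(* Main.v *)
Require Import Defs.
From mathcomp Require Import all_boot.

Lemma head_filter_iota (q : pred nat) d k : forall a,
  let r := head d [seq i <- iota a k | q i] in
  (r = d /\ forall i, a <= i < a + k -> ~~ q i) \/
  ([/\ a <= r < a + k, q r & forall i, a <= i < r -> ~~ q i]).
Proof.
elim: k => [|k IH] a /=.
  by left; split=> // i; rewrite addn0 => /andP[h1 h2]; move: (leq_trans h2 h1); rewrite ltnn.
case qa: (q a) => /=.
  right; split=> //; first by rewrite leqnn addnS ltnS leq_addr.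
  by move=> i /andP[h1 h2]; move: (leq_trans h2 h1); rewrite ltnn.
case: (IH a.+1) => [[-> H]|[H1 H2 H3]].
  left; split=> // i /andP[h1 h2]; case: (ltngtP a i) h1 => // [ai|<-] _; last by rewrite qa.
  by apply: H; rewrite ai addSnnS.
right; split=> //.
  by move: H1 => /andP[h1 h2]; rewrite (ltnW h1) -addSnnS.
move=> i /andP[h1 h2]; case: (ltngtP a i) h1 => // [ai|<-] _; last by rewrite qa.
by apply: H3; rewrite ai.
Qed.

Lemma first_idx_spec (P : pred nat) m : 0 < m ->
  let r := first_idx P m in
  [/\ 1 <= r <= m, P r || (r == m) & forall i, 1 <= i < r -> ~~ P i /\ i != m].
Proof.
move=> m0 /=; rewrite /first_idx.
case: (head_filter_iota (fun i => P i || (i == m)) m m 1) => [[_ H]|[H1 H2 H3]].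
  move: (H m); rewrite m0 add1n ltnSn eqxx orbT.
  by move/(_ isT).
split.
- by move: H1; rewrite add1n ltnS.
- exact: H2.
- by move=> i /H3; rewrite negb_or => /andP[].
Qed.

Lemma prec_char (T : eqType) (vj vk : T) n X :
  Precedence vj vk n X <->
  (forall i, 1 <= i <= n -> X i = vk -> exists2 l, 1 <= l < i & X l = vj).
Proof.
rewrite /Precedence.
set Pa := fun i => (i <= n) && (X i == vj).
set Pb := fun i => (i <= n) && (X i == vk).
have [/andP[a1 a2] a3 a4] := @first_idx_spec Pa _ (ltn0Sn n).
have [/andP[b1 b2] b3 b4] := @first_idx_spec Pb _ (ltn0Sn n.+1).
set fa := first_idx Pa n.+1 in a1 a2 a3 a4 *.
set fb := first_idx Pb n.+2 in b1 b2 b3 b4 *.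
split.
  move=> lt i /andP[i1 i2] Xi.
  have fbi : fb <= i.
    rewrite leqNgt; apply/negP => h.
    by case: (b4 i); rewrite ?i1 ?h // /Pb i2 Xi eqxx.
  have fan : fa != n.+1 by rewrite neq_ltn (leq_trans lt (leq_trans fbi (leqW i2))).
  move: a3; rewrite (negbTE fan) orbF /Pa => /andP[_ /eqP Xa].
  by exists fa; rewrite // a1 (leq_trans lt fbi).
move=> H.
case fbe: (fb == n.+2); first by rewrite (eqP fbe) ltnS.
move: b3; rewrite fbe orbF /Pb => /andP[fbn /eqP Xb].
have [l /andP[l1 l2] Xl] := H fb (introT andP (conj b1 fbn)) Xb.
apply: (@leq_trans l.+1) => //; rewrite ltnS leqNgt; apply/negP => h.
case: (a4 l); rewrite ?l1 ?h //.
by rewrite /Pa Xl eqxx andbT (leq_trans (ltnW l2) fbn).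
Qed.

Lemma partA (T : eqType) (vj vk : T) (hne : vj != vk) n X :
  Precedence vj vk n X <->
     exists B : nat -> bool,
       B 1 = false /\ (forall i, 1 <= i <= n -> Cprec vj vk (X i) (B i) (B i.+1)).
Proof.
have PC := @prec_char T vj vk n X.
suff: (forall i, 1 <= i <= n -> X i = vk -> exists2 l, 1 <= l < i & X l = vj) <-> exists B : nat -> bool, B 1 = false /\ (forall i, 1 <= i <= n -> Cprec vj vk (X i) (B i) (B i.+1)).
  by move=> h; apply: iff_trans h.
split.
  move=> H; exists (fun i => has (fun l => X l == vj) (iota 1 i.-1)); split=> //.
  move=> i /andP[i1 i2] /=.
  have -> : iota 1 i = iota 1 i.-1 ++ [:: i].
    by case: (i) i1 => // k _; have := iotaD 1 k 1; rewrite addn1 add1n.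
  rewrite has_cat /= orbF /Cprec.
  case: (X i =P vj) => [->|Xi] /=; first by rewrite orbT /= hne implybT.
  rewrite orbF eqxx /=; apply/implyP => /negP hb; apply/negP => /eqP Xk.
  apply: hb; have [l /andP[l1 l2] Xl] := H i (introT andP (conj i1 i2)) Xk.
  by apply/hasP; exists l; rewrite ?Xl // mem_iota l1 add1n prednK.
move=> [B [B1 HC]].
have HB : forall i, 1 <= i <= n.+1 -> B i = has (fun l => X l == vj) (iota 1 i.-1).
  elim=> // i IH /andP[_ i2].
  case: i IH i2 => [|i] IH i2; first by rewrite B1.
  have {}IH := IH (introT andP (conj (ltn0Sn i) (ltnW i2))).
  move: i2; rewrite ltnS => i2.
  have := HC i.+1; rewrite ltn0Sn i2 => /(_ isT); rewrite /Cprec.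
  have -> : iota 1 i.+2.-1 = iota 1 i.+1.-1 ++ [:: i.+1].
    by rewrite /=; have := iotaD 1 i 1; rewrite addn1 add1n.
  rewrite has_cat /= orbF -IH.
  case: (X i.+1 =P vj) => [_|_] /=; first by rewrite orbT => /andP[-> _].
  by rewrite orbF => /andP[/eqP -> _].
move=> i /andP[i1 i2] Xk.
have := HC i; rewrite i1 i2 => /(_ isT) /and3P[_ _].
rewrite Xk eqxx implybF negbK (HB i); last by rewrite i1 leqW.
move=> /hasP[l]; rewrite mem_iota add1n prednK // => l1 /eqP Xl.
by exists l.
Qed.

Section B.
Variables (T : eqType) (vj vk : T) (n : nat) (DX : nat -> seq T) (DB : nat -> seq bool).
Hypothesis H1 : forall b, (b \in DB 1) = (b == false).
Hypothesis HG : forall i, 1 <= i <= n -> GAC_C vj vk (DX i) (DB i) (DB i.+1).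

Lemma back : forall i, 1 <= i <= n.+1 -> forall b, b \in DB i ->
  exists X, exists B, [/\ B 1 = false, B i = b,
     forall l, 1 <= l < i -> Cprec vj vk (X l) (B l) (B l.+1)
   & forall l, 1 <= l < i -> X l \in DX l].
Proof.
elim=> // i IH /andP[_ i2] b.
case: i IH i2 => [|i] IH i2.
  rewrite H1 => /eqP ->; exists (fun _ => vj), (fun _ => false); split=> //.
    by move=> l /andP[a c]; move: (leq_trans a c).
  by move=> l /andP[a c]; move: (leq_trans a c).
move=> bin.
have [_ _ G3] := HG _ (introT andP (conj (ltn0Sn i) i2)).
have [x xin [b0 b0in Cx]] := G3 b bin.
have [X [B [B1 Bi HC HD]]] := IH (introT andP (conj (ltn0Sn i) (ltnW i2))) b0 b0in.
exists (fun l => if l == i.+1 then x else X l), (fun l => if l == i.+2 then b else B l).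
split=> //; first by rewrite eqxx.
  move=> l /andP[l1 l2]; rewrite ltnS leq_eqVlt in l2.
  case/orP: l2 => [/eqP ->|l2]; first by rewrite (ltn_eqF (ltnSn i.+1)) !eqxx Bi.
  rewrite eqSS (ltn_eqF l2) (ltn_eqF (ltn_trans l2 (ltnSn _))).
  by apply: HC; rewrite l1.
move=> l /andP[l1 l2]; rewrite ltnS leq_eqVlt in l2.
case/orP: l2 => [/eqP ->|l2]; first by rewrite eqxx.
by rewrite (ltn_eqF l2); apply: HD; rewrite l1.
Qed.

Lemma fwd : forall k i, i + k = n.+1 -> 1 <= i -> forall b, b \in DB i ->
  exists X, exists B, [/\ B i = b,
     forall l, i <= l <= n -> Cprec vj vk (X l) (B l) (B l.+1)
   & forall l, i <= l <= n -> X l \in DX l].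
Proof.
elim=> [|k IH] i e i1 b bin.
  rewrite addn0 in e; subst i.
  exists (fun _ => vj), (fun _ => b); split=> // l /andP[a c]; move: (leq_trans a c);
    by rewrite ltnn.
have iin : i <= n by rewrite -ltnS -e addnS ltnS leq_addr.
have [_ G2 _] := HG _ (introT andP (conj i1 iin)).
have [x xin [b' b'in Cx]] := G2 b bin.
have [X [B [Bi HC HD]]] := IH i.+1 (etrans (addSnnS i k) e) (ltn0Sn _) b' b'in.
exists (fun l => if l == i then x else X l), (fun l => if l == i then b else B l).
split=> //; first by rewrite eqxx.
  move=> l /andP[l1 l2]; rewrite leq_eqVlt in l1.
  case/orP: l1 => [/eqP <-|l1]; first by rewrite eqxx (gtn_eqF (ltnSn _)) Bi.
  rewrite (gtn_eqF l1) (gtn_eqF (ltn_trans l1 (ltnSn l))).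
  by apply: HC; rewrite l1.
move=> l /andP[l1 l2]; rewrite leq_eqVlt in l1.
case/orP: l1 => [/eqP <-|l1]; first by rewrite eqxx.
by rewrite (gtn_eqF l1); apply: HD; rewrite l1.
Qed.

End B.

Theorem mainTheorem7 (T : eqType) (vj vk : T) (hne : vj != vk) (n : nat) :
  (forall X : nat -> T,
     Precedence vj vk n X <->
     exists B : nat -> bool,
       B 1 = false /\ (forall i, 1 <= i <= n -> Cprec vj vk (X i) (B i) (B i.+1)))
  /\
  (forall (DX : nat -> seq T) (DB : nat -> seq bool),
     (forall b, (b \in DB 1) = (b == false)) ->
     (forall i, 1 <= i <= n -> DX i != [::]) ->
     (forall i, 1 <= i <= n.+1 -> DB i != [::]) ->
     (forall i, 1 <= i <= n -> GAC_C vj vk (DX i) (DB i) (DB i.+1)) ->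
     GAC_Prec vj vk n DX).
Proof.
split; first by move=> X; apply: partA.
move=> DX DB H1 _ _ HG i /andP[i1 i2] v vin.
have [G1 _ _] := HG _ (introT andP (conj i1 i2)).
have [b bin [b' b'in Cv]] := G1 v vin.
have [Xb [Bb [B1 Bbi HCb HDb]]] := @back _ _ _ _ _ _ H1 HG i (introT andP (conj i1 (leqW i2))) _ bin.
have [k ek] : exists k, i.+1 + k = n.+1 by exists (n - i); rewrite addSn subnKC.
have [Xf [Bf [Bfi HCf HDf]]] := @fwd _ _ _ _ _ _ HG _ _ ek (ltn0Sn i) _ b'in.
exists (fun l => if l < i then Xb l else if l == i then v else Xf l); split; last first.
  by rewrite ltnn eqxx.
split.
  move=> l /andP[l1 l2]; case: (ltngtP l i) => [li|il|->] //.
    by apply: HDb; rewrite l1.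
  by apply: HDf; rewrite il.
apply/(@partA T vj vk hne n); exists (fun l => if l <= i then Bb l else Bf l); split; first by rewrite i1.
move=> l /andP[l1 l2]; case: (ltngtP l i) => [li|il|->].
- by apply: HCb; rewrite l1.
- by apply: HCf; rewrite il.
- by rewrite Bbi Bfi.
Qed.
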